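(* For $n\ge2$, the natural homomorphism from the abstract commensurator $\operatorname{Com}(\mathcal{H}_n)$ to the quasi-isometry group $\operatorname{QI}(\mathcal{H}_n)$ is injective.
   Context: Let $\mathbb{N}=\{1,2,3,\dots\}$, $\mathbb{Z}_n$ the integers modulo $n$, $R_n=\mathbb{Z}_n\times\mathbb{N}$. The Houghton group $\mathcal{H}_n$ is the group of permutations $\sigma$ of $R_n$ for which there exist $N\ge0$ and integers $t_i$ with $(i,k)\sigma=(i,k+t_i)$ for all $i\in\mathbb{Z}_n$, $k\ge N$ (right actions); it is finitely generated for $n\ge2$ and is given a word metric. A commensuration of a group $G$ is an isomorphism $\phi:A\to B$ between finite-index subgroups of $G$; two are equivalent if they agree on a finite-index subgroup; $\operatorname{Com}(G)$ is the group of equivalence classes. $\operatorname{QI}(G)$ is the group of quasi-isometries $G\to G$ modulo those at bounded distance from each other. A commensuration $\phi:A\to B$ is a quasi-isometry of $G$ (since $A,B$ are quasi-isometric to $G$ via inclusion), giving the natural homomorphism $\operatorname{Com}(G)\to\operatorname{QI}(G)$. *)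

(* Defs.v *)
From mathcomp Require Import all_boot all_algebra.
From Stdlib Require Import ClassicalEpsilon.
Set Implicit Arguments. Unset Strict Implicit. Unset Printing Implicit Defensive.
Import GRing.Theory Num.Theory.

(* R_n = Z_n x N.  Z_n is represented by 'I_n (n >= 2 in the theorem), and
   the positive integer k+1 of N = {1,2,...} is encoded by the nat k. *)
Definition Rn (n : nat) : Type := ('I_n * nat)%type.

Definition perm_fun (n : nat) : Type := Rn n -> Rn n.

Definition houghton (n : nat) (s : perm_fun n) : Prop :=
  bijective s /\
  exists (N : nat) (t : 'I_n -> int),
    forall (i : 'I_n) (k : nat), (N <= k)%N ->
      (s (i, k)).1 = i /\ (((s (i, k)).2)%:Z = k%:Z + t i)%R.

(* Group structure with right actions: x(st) = (xs)t, so st = t o s. *)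
Definition hmul (n : nat) (s t : perm_fun n) : perm_fun n := fun x => t (s x).
Definition hone (n : nat) : perm_fun n := fun x => x.
Definition hinv (n : nat) (s : perm_fun n) : perm_fun n :=
  fun y => epsilon (inhabits y) (fun x => s x = y).

Definition subgroup (n : nat) (A : perm_fun n -> Prop) : Prop :=
  (forall g, A g -> houghton g) /\ A (@hone n) /\
  (forall g h, A g -> A h -> A (hmul g h)) /\
  (forall g, A g -> A (hinv g)).

Definition finite_index (n : nat) (A : perm_fun n -> Prop) : Prop :=
  subgroup A /\
  exists reps : seq (perm_fun n),
    (forall g, List.In g reps -> houghton g) /\
    forall h, houghton h -> exists g a, List.In g reps /\ A a /\ h = hmul g a.

Definition commensuration (n : nat) (A B : perm_fun n -> Prop)
    (phi : perm_fun n -> perm_fun n) : Prop :=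
  finite_index A /\ finite_index B /\
  (forall a, A a -> B (phi a)) /\
  (forall a b, A a -> A b -> phi (hmul a b) = hmul (phi a) (phi b)) /\
  (forall a b, A a -> A b -> phi a = phi b -> a = b) /\
  (forall b, B b -> exists a, A a /\ phi a = b).

Definition letter (n m : nat) (gen : 'I_m -> perm_fun n) (l : bool * 'I_m)
  : perm_fun n := if l.1 then hinv (gen l.2) else gen l.2.

Definition word_eval (n m : nat) (gen : 'I_m -> perm_fun n)
    (w : seq (bool * 'I_m)) : perm_fun n :=
  foldr (fun l acc => hmul (letter gen l) acc) (@hone n) w.

Definition generating_family (n m : nat) (gen : 'I_m -> perm_fun n) : Prop :=
  (forall j, houghton (gen j)) /\
  (forall g, houghton g -> exists w, word_eval gen w = g).

Definition word_dist_le (n m : nat) (gen : 'I_m -> perm_fun n)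
    (g h : perm_fun n) (C : nat) : Prop :=
  exists w, (size w <= C)%N /\ word_eval gen w = hmul (hinv g) h.

(* Main.v *)
Require Import Defs.
From mathcomp Require Import all_boot all_algebra.
From Stdlib Require Import ClassicalEpsilon Classical FunctionalExtensionality.
From Stdlib Require List.
From mathcomp Require Import zify.
Set Implicit Arguments. Unset Strict Implicit. Unset Printing Implicit Defensive.

Lemma hinvK n (s : perm_fun n) : bijective s -> forall y, s (hinv s y) = y.
Proof.
move=> [g sg gs] y; rewrite /hinv.
exact: (epsilon_spec (inhabits y) (fun x => s x = y) (ex_intro _ (g y) (gs y))).
Qed.

Lemma hinvKl n (s : perm_fun n) : bijective s -> forall x, hinv s (s x) = x.
Proof. by move=> sb x; apply: (bij_inj sb); rewrite hinvK. Qed.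

Definition dispb n (s : perm_fun n) B := forall x : Rn n,
  ((s x).2 <= x.2 + B)%N /\ (x.2 <= (s x).2 + B)%N.

Lemma dispb_mono n (s : perm_fun n) B B' : (B <= B')%N -> dispb s B -> dispb s B'.
Proof. move=> le h x; have := h x; lia. Qed.

Lemma houghton_disp n (s : perm_fun n) : houghton s -> exists B, dispb s B.
Proof.
move=> [_ [N [t Ht]]].
pose M0 := \max_(i : 'I_n) \max_(k < N) (s (i, (k:nat))).2.
pose T := \max_(i : 'I_n) `|t i|%N.
exists (M0 + N + T) => -[i k] /=.
have hT : (`|t i| <= T)%N.
  rewrite /T. apply: leq_bigmax.
have [hk|hk] := leqP N k.
- have [_ e] := Ht i k hk. lia.
- have : ((s (i, k)).2 <= M0)%N.
    rewrite /M0; apply: (@leq_trans (\max_(k < N) (s (i, (k:nat))).2)); last by apply: leq_bigmax.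
    have -> : k = Ordinal hk by [].
    apply: leq_bigmax.
  lia.
Qed.

Lemma dispb_inv n (s : perm_fun n) B : bijective s -> dispb s B -> dispb (hinv s) B.
Proof.
move=> sb h y. have := h (hinv s y). rewrite hinvK //. lia.
Qed.

Lemma dispb_comp n (s u : perm_fun n) B B' : dispb s B -> dispb u B' ->
  dispb (hmul s u) (B + B').
Proof. move=> h1 h2 x; rewrite /hmul; have := h1 x; have := h2 (s x); lia. Qed.

Lemma word_disp n m (gen : 'I_m -> perm_fun n) : (forall j, houghton (gen j)) ->
  exists B0, forall w, dispb (word_eval gen w) (size w * B0).
Proof.
move=> hg.
have : forall j, exists B, dispb (gen j) B by move=> j; exact: houghton_disp.
case/fin_all_exists=> Bf hB.
exists (\sum_j Bf j) => w; elim: w => [|l w IH] /=.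
  by move=> x; rewrite /hone; lia.
have hl : dispb (letter gen l) (\sum_j Bf j).
  have hle : (Bf l.2 <= \sum_j Bf j)%N.
    by rewrite (bigD1 l.2) //=; lia.
  rewrite /letter; case: ifP => _.
  - apply: dispb_inv; first by case: (hg l.2).
    exact: dispb_mono hle (hB _).
  - exact: dispb_mono hle (hB _).
by rewrite mulSn; exact: dispb_comp hl IH.
Qed.

Definition hpow n (x : perm_fun n) k : perm_fun n := fun y => iter k x y.

Lemma pow_in n (S : perm_fun n -> Prop) (x : perm_fun n) (reps : seq (perm_fun n)) :
  subgroup S -> (forall g, List.In g reps -> houghton g) ->
  (forall h, houghton h -> exists g a, List.In g reps /\ S a /\ h = hmul g a) ->
  (forall j, houghton (hpow x j)) ->
  exists d, (0 < d)%N /\ (d <= length reps)%N /\ S (hpow x d).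
Proof.
move=> [hS [h1 [hm hi]]] hreps hdec hx.
pose G j := epsilon (inhabits (@hone n))
  (fun g => List.In g reps /\ exists a, S a /\ hpow x j = hmul g a).
have HG : forall j, List.In (G j) reps /\ exists a, S a /\ hpow x j = hmul (G j) a.
  move=> j; apply: (epsilon_spec (inhabits (@hone n))
    (fun g => List.In g reps /\ exists a, S a /\ hpow x j = hmul g a)).
  have [g [a [e1 [e2 e3]]]] := hdec _ (hx j).
  by exists g; split => //; exists a.
have [a [b [hab eab]]] : exists a b, (a < b <= length reps)%N /\ G a = G b.
  apply: NNPP => hno.
  have hnd : List.NoDup (List.map G (List.seq 0 (length reps).+1)).
    apply: List.NoDup_map_NoDup_ForallPairs; last exact: List.seq_NoDup.
    move=> a b /List.in_seq ha /List.in_seq hb e; apply: NNPP => ne.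
    have [lt|lt|eq] := ltngtP a b.
    - by apply: hno; exists a, b; split => //; lia.
    - by apply: hno; exists b, a; split => //; lia.
    - exact: ne.
  have incl : List.incl (List.map G (List.seq 0 (length reps).+1)) reps.
    by move=> y /List.in_map_iff [j [<- _]]; exact: (HG j).1.
  have := List.NoDup_incl_length hnd incl.
  rewrite List.length_map List.length_seq. lia.
have [ga [al [Sal eal]]] := HG a; have [gb [be [Sbe ebe]]] := HG b.
rewrite -eab in ebe.
have [g' _ gg'] := (hreps _ ga).1.
have alb : bijective al by case: (hS _ Sal).
exists (b - a); split; first lia; split; first lia.
have -> : hpow x (b - a) = hmul (hinv al) be.
  apply: functional_extensionality => y; rewrite /hmul /hpow.
  have ey : y = al (G a (g' (hinv al y))) by rewrite gg' hinvK.
  rewrite {1}ey.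
  have := congr1 (fun f => f (g' (hinv al y))) eal; rewrite /hmul /hpow /= => <-.
  rewrite -iterD subnK; last lia.
  have := congr1 (fun f => f (g' (hinv al y))) ebe; rewrite /hmul /hpow /= => ->.
  by rewrite gg'.
by apply: hm => //; apply: hi.
Qed.

Lemma houghton_one n : houghton (@hone n).
Proof.
split; first by exists (@hone n).
by exists 0%N, (fun _ => 0%R) => i k _; rewrite /hone /= GRing.addr0.
Qed.

Lemma fi_inter n (A A' : perm_fun n -> Prop) : finite_index A -> finite_index A' ->
  finite_index (fun g => A g /\ A' g).
Proof.
move=> [[hA [A1 [Am Ai]]] [rA [hrA dA]]] [[hA' [A1' [Am' Ai']]] [rA' [hrA' dA']]].
split.
  split; first by move=> g [/hA].
  split; first by [].
  split; first by move=> g h [? ?] [? ?]; split; [apply: Am|apply: Am'].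
  by move=> g [? ?]; split; [apply: Ai|apply: Ai'].
pose Q g1 g2 r := exists a a', A a /\ A' a' /\ r = hmul g1 a /\ r = hmul g2 a'.
pose P g1 g2 r := houghton r /\ ((exists r', houghton r' /\ Q g1 g2 r') -> Q g1 g2 r).
pose rf g1 g2 := epsilon (inhabits (@hone n)) (P g1 g2).
have Hrf : forall g1 g2, P g1 g2 (rf g1 g2).
  move=> g1 g2; apply: (epsilon_spec (inhabits (@hone n)) (P g1 g2)).
  case: (classic (exists r', houghton r' /\ Q g1 g2 r')) => [[r' [hr' qr']]|no].
    by exists r'; split.
  by exists (@hone n); split; [exact: houghton_one | move=> /no].
exists (List.flat_map (fun g1 => List.map (rf g1) rA') rA); split.
  by move=> r /List.in_flat_map [g1 [_ /List.in_map_iff [g2 [<- _]]]]; exact: (Hrf g1 g2).1.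
move=> h hh.
have [g1 [a [i1 [Aa e1]]]] := dA h hh; have [g2 [a' [i2 [Aa' e2]]]] := dA' h hh.
have [hr hQ] := Hrf g1 g2.
have [a0 [a0' [Aa0 [Aa0' [er1 er2]]]]] : Q g1 g2 (rf g1 g2).
  by apply: hQ; exists h; split => //; exists a, a'.
have b0 : bijective a0 by case: (hA _ Aa0).
have b0' : bijective a0' by case: (hA' _ Aa0').
have [r' _ rr'] := hr.1.
have key : hmul (hinv a0) a = hmul (hinv a0') a'.
  apply: functional_extensionality => y; rewrite /hmul.
  have E1 : forall w, rf g1 g2 w = a0 (g1 w) by move=> w; rewrite er1.
  have E2 : forall w, rf g1 g2 w = a0' (g2 w) by move=> w; rewrite er2.
  rewrite -(rr' y) {1}E1 E2 !hinvKl //.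
  have := congr1 (fun f => f (r' y)) e1; have := congr1 (fun f => f (r' y)) e2.
  by rewrite /hmul /= => <- <-.
exists (rf g1 g2), (hmul (hinv a0) a); split.
  by apply/List.in_flat_map; exists g1; split => //; apply/List.in_map_iff; exists g2.
split.
  split; first by apply: Am => //; apply: Ai.
  by rewrite key; apply: Am' => //; apply: Ai'.
apply: functional_extensionality => z; rewrite /hmul er1 /hmul hinvKl //.
by rewrite e1.
Qed.

Definition cyc n (x0 : Rn n) H R : perm_fun n := fun x =>
  if x == x0 then (x0.1, H.+1)
  else if (x.1 == x0.1) && (H < x.2 <= H + R)%N then
    (if x.2 == H + R then x0 else (x0.1, x.2.+1))
  else x.

Definition cycinv n (x0 : Rn n) H R : perm_fun n := fun x =>
  if x == x0 then (x0.1, H + R)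
  else if (x.1 == x0.1) && (H < x.2 <= H + R)%N then
    (if x.2 == H.+1 then x0 else (x0.1, x.2.-1))
  else x.

Ltac crush := repeat (case: ifP => /=); rewrite ?xpair_eqE /=;
  repeat match goal with
  | H : is_true (_ && _) |- _ => case/andP: H
  | H : (_ && _) = true |- _ => case/andP: H
  | H : is_true (_ == _) |- _ => move/eqP: H
  | H : (_ == _) = true |- _ => move/eqP: H
  end; intros; subst; try lia.

Lemma cyc_bij n (x0 : Rn n) H R : (x0.2 <= H)%N -> (0 < R)%N -> bijective (cyc x0 H R).
Proof.
case: x0 => i0 k0 /= hk hR.
exists (cycinv (i0, k0) H R) => -[i k]; rewrite /cyc /cycinv /=.
- case: ((i, k) =P (i0, k0)) => [[-> ->]|ne].
    rewrite /= xpair_eqE eqxx /= (_ : (H.+1 == k0) = false); last by apply/eqP; lia.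
    by rewrite /= eqxx; have -> : (H < H.+1 <= H + R)%N by lia.
  case C: [&& i == i0, H < k & k <= H + R].
    case/andP: C => /eqP -> /andP [C1 C2].
    case C3: (k == H + R).
      by rewrite /= !xpair_eqE !eqxx /=; move/eqP: C3 => ->.
    rewrite /= !xpair_eqE !eqxx /= (_ : (k.+1 == k0) = false); last lia.
    rewrite /= (_ : (H < k.+1 <= H + R)%N); last lia.
    by rewrite (_ : (k.+1 == H.+1) = false); last lia.
  have -> : ((i, k) == (i0, k0)) = false by apply/eqP.
  by rewrite /= C.
- case: ((i, k) =P (i0, k0)) => [[-> ->]|ne].
    rewrite /= !xpair_eqE !eqxx /= (_ : (H + R == k0) = false); last lia.
    rewrite /= (_ : (H < H + R <= H + R)%N); last lia.
    by [].
  case C: [&& i == i0, H < k & k <= H + R].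
    case/andP: C => /eqP -> /andP [C1 C2].
    case C3: (k == H.+1).
      by rewrite /= !xpair_eqE !eqxx /=; move/eqP: C3 => ->.
    rewrite /= !xpair_eqE !eqxx /= (_ : (k.-1 == k0) = false); last lia.
    rewrite /= (_ : (H < k.-1 <= H + R)%N); last lia.
    rewrite (_ : (k.-1 == H + R) = false); last lia.
    by congr pair; lia.
  have -> : ((i, k) == (i0, k0)) = false by apply/eqP.
  by rewrite /= C.
Qed.

Lemma cyc_fix n (x0 : Rn n) H R y : (x0.2 <= H)%N -> y <> x0 ->
  (y.2 <= H \/ H + R < y.2)%N -> cyc x0 H R y = y.
Proof.
move=> h0 ne hy; rewrite /cyc.
have -> : (y == x0) = false by apply/eqP.
have -> : ((y.1 == x0.1) && (H < y.2 <= H + R)%N) = false.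
  by apply/negbTE; rewrite negb_and; apply/orP; right; apply/negP; lia.
by [].
Qed.

Lemma cyc_iter_fix n (x0 : Rn n) H R y j : (x0.2 <= H)%N -> y <> x0 ->
  (y.2 <= H \/ H + R < y.2)%N -> iter j (cyc x0 H R) y = y.
Proof. by move=> h0 ne hy; elim: j => //= j ->; apply: cyc_fix. Qed.

Lemma cyc_iter_x0 n (x0 : Rn n) H R k : (x0.2 <= H)%N -> (0 < k <= R)%N ->
  iter k (cyc x0 H R) x0 = (x0.1, H + k).
Proof.
move=> h0; elim: k => // k IH hk /=.
case: k IH hk => [|k] IH hk.
  by rewrite /= /cyc eqxx addn1.
rewrite IH; last lia.
rewrite /cyc.
have -> : ((x0.1, H + k.+1) == x0) = false.
  by apply/negbTE; apply/negP => /eqP e; move: h0; rewrite -e /=; lia.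
rewrite /= eqxx /= (_ : (H < H + k.+1 <= H + R)%N); last lia.
rewrite (_ : (H + k.+1 == H + R) = false); last lia.
by congr pair; lia.
Qed.

Lemma iter_bij T (f : T -> T) j : bijective f -> bijective (fun y => iter j f y).
Proof.
move=> bf; elim: j => [|j IH]; first by exists id.
exact: (bij_comp bf IH).
Qed.

Lemma cyc_houghton n (x0 : Rn n) H R j : (x0.2 <= H)%N -> (0 < R)%N ->
  houghton (hpow (cyc x0 H R) j).
Proof.
move=> h0 hR; split; first exact: iter_bij (cyc_bij h0 hR).
exists (H + R).+1, (fun _ => 0%R) => i k hk.
rewrite /hpow cyc_iter_fix //=; last by right; lia.
  by rewrite GRing.addr0.
by move=> e; move: h0; rewrite -e /=; lia.
Qed.

Lemma pow_mem n (S : perm_fun n -> Prop) a j : subgroup S -> S a -> S (hpow a j).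
Proof.
move=> [_ [h1 [hm _]]] Sa; elim: j => [|j IH]; first exact: h1.
exact: (hm _ _ IH Sa).
Qed.

Lemma hom_pow n (A : perm_fun n -> Prop) (phi : perm_fun n -> perm_fun n) a j :
  subgroup A -> A a ->
  (forall a b, A a -> A b -> phi (hmul a b) = hmul (phi a) (phi b)) ->
  phi (hpow a j.+1) = hpow (phi a) j.+1.
Proof.
move=> sA Aa hm; elim: j => [|j IH]; first by [].
have -> : hpow a j.+2 = hmul (hpow a j.+1) a by [].
by rewrite hm ?IH //; exact: pow_mem.
Qed.

Theorem mainTheorem9 (n : nat) (hn : (2 <= n)%N)
    (m : nat) (gen : 'I_m -> perm_fun n) (hgen : generating_family gen)
    (A B A' B' : perm_fun n -> Prop) (phi psi : perm_fun n -> perm_fun n) :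
  commensuration A B phi -> commensuration A' B' psi ->
  (exists C : nat, forall g, A g -> A' g -> word_dist_le gen (phi g) (psi g) C) ->
  exists D : perm_fun n -> Prop,
    finite_index D /\ (forall g, D g -> A g /\ A' g) /\
    (forall g, D g -> phi g = psi g).
Proof.
move=> [fiA [fiB [phiAB [phim [phii phis]]]]] [fiA' [fiB' [psiAB' [psim [psii psis]]]]] [C hC].
exists (fun g => A g /\ A' g); split; first exact: fi_inter.
split; first by [].
have [B0 hB0] := word_disp hgen.1.
pose E := C * B0.
have dE : forall g, A g -> A' g -> exists W, dispb W E /\ forall z, W (phi g z) = psi g z.
  move=> g Ag A'g; have [w [hw ew]] := hC g Ag A'g.
  exists (word_eval gen w); split.
    by apply: dispb_mono (hB0 w); rewrite /E leq_mul2r hw orbT.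
  have bg : bijective (phi g) by case: (fiB.1.1 _ (phiAB _ Ag)).
  by move=> z; rewrite ew /hmul hinvKl.
move=> g [Ag A'g].
apply: functional_extensionality => x; apply: NNPP => ne.
pose x0 := phi g x; pose y0 := psi g x.
pose H := x0.2 + y0.2 + 2 * E + 1.
case: fiB => sB [rB [hrB dB]].
case: (fiA') => sA' [rA' [hrA' dA']].
pose R := (length rB * length rA').+1.
have h0 : (x0.2 <= H)%N by rewrite /H; lia.
have hR : (0 < R)%N by [].
pose t := cyc x0 H R.
have [d [d0 [dle Bd]]] := pow_in (x:=t) sB hrB dB (fun j => cyc_houghton j h0 hR).
have [a [Aa ea]] := phis _ Bd.
have [e [e0 [ele A'e]]] : exists e, (0 < e)%N /\ (e <= length rA')%N /\ A' (hpow a e).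
  apply: (pow_in (x:=a) sA' hrA' dA') => j.
  exact: fiA.1.1 _ (pow_mem j fiA.1 Aa).
pose h := hpow a e.
have Ah : A h := pow_mem e fiA.1 Aa.
have ephi : forall z, phi h z = iter (e * d) t z.
  have [e' ee] : exists e', e = e'.+1 by exists e.-1; lia.
  move=> z; rewrite /h ee.
  by rewrite (hom_pow e' fiA.1 Aa phim) ea /hpow iterM.
have ux : phi h x0 = (x0.1, H + e * d).
  by rewrite ephi cyc_iter_x0 //; apply/andP; split; [rewrite muln_gt0 e0 d0 | rewrite /R; nia].
have uy : phi h y0 = y0.
  rewrite ephi cyc_iter_fix //; last by left; rewrite /H; lia.
  by move=> e1; apply: ne.
have Agh : A (hmul g h) by apply: fiA.1.2.2.1.
have A'gh : A' (hmul g h) by apply: fiA'.1.2.2.1.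
have [W1 [d1 e1]] := dE _ Agh A'gh.
have [W2 [d2 e2]] := dE _ Ah A'e.
have := e1 x; rewrite phim // psim // /hmul -/x0 -/y0 ux.
rewrite -e2 uy => eq.
have := d1 (x0.1, H + e * d); have := d2 y0; rewrite eq /=.
rewrite /H; lia.
Qed.
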